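(* Let $a>0$, $b,c\ge 0$, and consider the system $$\dot x=x(1-y+cx-axz),\qquad \dot y=y(-1+x),\qquad \dot z=z(-b+ax^2).$$ Let $f$ be an irreducible Darboux polynomial of degree greater than one with non-zero cofactor $$K=\alpha_0+\alpha_1x+\alpha_2y+\alpha_3z+N_4a\,x^2-N_6a\,xz,$$ where $\alpha_i\in\mathbb{C}$ and $N_4,N_6\in\mathbb{N}\cup\{0\}$. Then $\alpha_0=\alpha_1=\alpha_3=N_4=N_6=0$.
   Context: A Darboux polynomial is $f\in\mathbb{C}[x,y,z]$ with $x(1-y+cx-axz)f_x+y(-1+x)f_y+z(-b+ax^2)f_z=Kf$ for a polynomial cofactor $K$ of degree at most two. *)

(* Defs.v *)
From HB Require Import structures.
From mathcomp Require Import all_boot all_order all_algebra.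
From mathcomp Require Import complex.
From mathcomp Require Import mpoly.
Set Implicit Arguments. Unset Strict Implicit. Unset Printing Implicit Defensive.
Import Order.TTheory GRing.Theory Num.Theory.
Local Open Scope ring_scope.

Section Defs.
Variable R : rcfType.
Local Notation C := (R[i]).
Local Notation P := {mpoly C[3]}.

Definition ofR (r : R) : C := Complex r 0.

Definition vx : P := 'X_(0 : 'I_3).
Definition vy : P := 'X_(1 : 'I_3).
Definition vz : P := 'X_(2 : 'I_3).
Definition cst (c : C) : P := c%:MP.

Definition Px (a c : R) : P := vx * (1 - vy + cst (ofR c) * vx - cst (ofR a) * vx * vz).
Definition Py : P := vy * (-1 + vx).
Definition Pz (a b : R) : P := vz * (- cst (ofR b) + cst (ofR a) * vx ^+ 2).

Definition vfield (a b c : R) (f : P) : P :=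
  Px a c * f^`M(0 : 'I_3) + Py * f^`M(1 : 'I_3) + Pz a b * f^`M(2 : 'I_3).

Definition darboux (a b c : R) (f K : P) : Prop :=
  f != 0 /\ (msize K <= 3)%N /\ vfield a b c f = K * f.

(* total degree (for nonzero p); msize p = 1 + degree *)
Definition tdeg (p : P) : nat := (msize p).-1.

Definition mirreducible (f : P) : Prop :=
  (1 < msize f)%N /\
  forall g h : P, f = g * h -> (msize g <= 1)%N \/ (msize h <= 1)%N.

End Defs.

(* Main.v *)
Require Import Defs.
From HB Require Import structures.
From mathcomp Require Import all_boot all_order all_algebra.
From mathcomp Require Import complex.
From mathcomp Require Import mpoly.
From mathcomp Require Import ring zify.
Set Implicit Arguments. Unset Strict Implicit. Unset Printing Implicit Defensive.
Import Order.TTheory GRing.Theory Num.Theory.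
Local Open Scope ring_scope.
Section S.
Variable R : rcfType.
Local Notation C := (R[i]).
Local Notation P := {mpoly C[3]}.

Definition mk (p q r : nat) : 'X_{1..3} := [multinom (nth 0%N [:: p; q; r] i) | i < 3].
Definition cf (h : P) p q r := h@_(mk p q r).

Lemma mkE p q r (i : 'I_3) : mk p q r i = nth 0%N [:: p; q; r] i.
Proof. by rewrite mnmE. Qed.

Lemma mk_of (m : 'X_{1..3}) : m = mk (m (0 : 'I_3)) (m (1 : 'I_3)) (m (2 : 'I_3)).
Proof. by apply/mnmP => -[[|[|[|k]]] hk] //; rewrite mkE /=; congr (m _); apply: val_inj. Qed.

Lemma coefMX (h : P) (i : 'I_3) m :
  (h * 'X_i)@_m = if (0 < m i)%N then h@_(m - U_(i)) else 0.
Proof.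
case: ifP => hm.
  have E : (U_(i) + (m - U_(i)))%MM = m.
    by rewrite addmC submK // lep1mP -lt0n.
  by rewrite -{1}E mcoeffMX.
apply/eqP; rewrite mcoeff_eq0; apply/negP => hin.
move: (perm_mem (msuppMX h U_(i)) m); rewrite hin => /esym /mapP [m' _ Em].
by move: hm; rewrite Em mnmDE mnm1E eqxx.
Qed.

Lemma cfMx h p q r : cf (h * vx R) p q r = if (0 < p)%N then cf h p.-1 q r else 0.
Proof.
rewrite /cf /vx coefMX mkE /=; case: p => [|p] //=; congr (h@_ _).
by apply/mnmP => -[[|[|[|k]]] hk] //; rewrite mnmBE !mkE mnm1E /= ?subn0 ?subn1.
Qed.
Lemma cfMy h p q r : cf (h * vy R) p q r = if (0 < q)%N then cf h p q.-1 r else 0.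
Proof.
rewrite /cf /vy coefMX mkE /=; case: q => [|q] //=; congr (h@_ _).
by apply/mnmP => -[[|[|[|k]]] hk] //; rewrite mnmBE !mkE mnm1E /= ?subn0 ?subn1.
Qed.
Lemma cfMz h p q r : cf (h * vz R) p q r = if (0 < r)%N then cf h p q r.-1 else 0.
Proof.
rewrite /cf /vz coefMX mkE /=; case: r => [|r] //=; congr (h@_ _).
by apply/mnmP => -[[|[|[|k]]] hk] //; rewrite mnmBE !mkE mnm1E /= ?subn0 ?subn1.
Qed.

Lemma cfDx h p q r : cf (h^`M(0 : 'I_3)) p q r = cf h p.+1 q r * p.+1%:R.
Proof.
rewrite /cf mcoeff_mderiv mkE /= mulr_natr; congr (h@_ _ *+ _).
by apply/mnmP => -[[|[|[|k]]] hk] //; rewrite mnmDE !mkE mnm1E /= ?addn0 ?addn1 //.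
Qed.
Lemma cfDy h p q r : cf (h^`M(1 : 'I_3)) p q r = cf h p q.+1 r * q.+1%:R.
Proof.
rewrite /cf mcoeff_mderiv mkE /= mulr_natr; congr (h@_ _ *+ _).
by apply/mnmP => -[[|[|[|k]]] hk] //; rewrite mnmDE !mkE mnm1E /= ?addn0 ?addn1 //.
Qed.
Lemma cfDz h p q r : cf (h^`M(2 : 'I_3)) p q r = cf h p q r.+1 * r.+1%:R.
Proof.
rewrite /cf mcoeff_mderiv mkE /= mulr_natr; congr (h@_ _ *+ _).
by apply/mnmP => -[[|[|[|k]]] hk] //; rewrite mnmDE !mkE mnm1E /= ?addn0 ?addn1 //.
Qed.

Lemma cfD h1 h2 p q r : cf (h1 + h2) p q r = cf h1 p q r + cf h2 p q r.
Proof. exact: mcoeffD. Qed.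
Lemma cfB h1 h2 p q r : cf (h1 - h2) p q r = cf h1 p q r - cf h2 p q r.
Proof. exact: mcoeffB. Qed.
Lemma cfC c h p q r : cf (cst c * h) p q r = c * cf h p q r.
Proof. exact: mcoeffCM. Qed.

End S.
Lemma cfN (R : rcfType) (h : {mpoly R[i][3]}) p q r : cf (- h) p q r = - cf h p q r.
Proof. exact: mcoeffN. Qed.
Section S3.
Variable R : rcfType.
Local Notation P := {mpoly R[i][3]}.
Lemma cfMxDx (h : P) p q r : cf (h^`M(0 : 'I_3) * vx R) p q r = cf h p q r * p%:R.
Proof. by rewrite cfMx; case: p => [|p] /=; rewrite ?mulr0 // cfDx. Qed.
Lemma cfMyDy (h : P) p q r : cf (h^`M(1 : 'I_3) * vy R) p q r = cf h p q r * q%:R.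
Proof. by rewrite cfMy; case: q => [|q] /=; rewrite ?mulr0 // cfDy. Qed.
Lemma cfMzDz (h : P) p q r : cf (h^`M(2 : 'I_3) * vz R) p q r = cf h p q r * r%:R.
Proof. by rewrite cfMz; case: r => [|r] /=; rewrite ?mulr0 // cfDz. Qed.
End S3.
Section S2.
Variable R : rcfType.
Local Notation C := (R[i]).
Local Notation P := {mpoly C[3]}.

Lemma vfieldE (a b c : R) (f : P) :
  vfield a b c f = f^`M(0 : 'I_3) * vx R - f^`M(0 : 'I_3) * vx R * vy R
    + cst (ofR c) * (f^`M(0 : 'I_3) * vx R * vx R)
    - cst (ofR a) * (f^`M(0 : 'I_3) * vx R * vx R * vz R)
    - f^`M(1 : 'I_3) * vy R + f^`M(1 : 'I_3) * vy R * vx R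
    - cst (ofR b) * (f^`M(2 : 'I_3) * vz R)
    + cst (ofR a) * (f^`M(2 : 'I_3) * vz R * vx R * vx R).
Proof. rewrite /vfield /Px /Py /Pz /=. ring. Qed.

Lemma cf_bound (f : P) p q r : cf f p q r != 0 -> (p + q + r < msize f)%N.
Proof.
rewrite /cf -mcoeff_msupp => /msize_mdeg_lt.
by rewrite mdegE !big_ord_recr big_ord0 /= !mkE /= add0n.
Qed.

Lemma nodiv (f : P) (i : 'I_3) : mirreducible f -> (1 < tdeg f)%N ->
  exists m : 'X_{1..3}, m i = 0%N /\ f@_m != 0.
Proof.
move=> [_ irr] dg.
have [/hasP [m hm /eqP mi]|hn] := boolP (has (fun m : 'X_{1..3} => m i == 0%N) (msupp f)).
  by exists m; split => //; rewrite -mcoeff_msupp.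
exfalso.
pose h : P := \sum_(m <- msupp f) f@_m *: 'X_[m - U_(i)].
have fE : f = h * 'X_i.
  rewrite {1}(mpolyE f) /h mulr_suml; apply: eq_big_seq => m hm.
  rewrite -scalerAl -mpolyXD submK // lep1mP.
  by apply: contra hn => e; apply/hasP; exists m.
case: (irr h 'X_i fE) => hs.
  have hc := msize1_polyC hs.
  have : (msize f <= 2)%N.
    rewrite fE hc mul_mpolyC; apply: leq_trans (msizeZ_le _ _) _.
    by rewrite msizeX mdeg1.
  by move: dg; rewrite /tdeg; case: (msize f) => [|[|[|k]]].
by move: hs; rewrite msizeX mdeg1.
Qed.

End S2.

Lemma maxsel (P : nat -> nat -> bool) (B : nat) : (exists x y, P x y) ->
  (forall x y, P x y -> (x < B)%N /\ (y < B)%N) ->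
  exists x y, P x y /\ forall x' y', P x' y' -> (x' <= x)%N.
Proof.
move=> [x0 [y0 h0]] hB.
pose Q x := [exists y : 'I_B, P x y].
have exQ : exists x, Q x by exists x0; apply/existsP; exists (Ordinal (hB _ _ h0).2).
have ubQ : forall x, Q x -> (x <= B)%N.
  by move=> x /existsP [y hy]; apply: ltnW; exact: (hB _ _ hy).1.
case: (ex_maxnP exQ ubQ) => x /existsP [y hy] hm.
exists x, y; split => // x' y' h; apply: hm; apply/existsP.
by exists (Ordinal (hB _ _ h).2).
Qed.

Lemma minsel (P : nat -> nat -> bool) (B : nat) : (exists x y, P x y) ->
  (forall x y, P x y -> (x < B)%N /\ (y < B)%N) ->
  exists x y, P x y /\ forall x' y', P x' y' -> (x <= x')%N.
Proof.
move=> [x0 [y0 h0]] hB.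
pose Q x := [exists y : 'I_B, P x y].
have exQ : exists x, Q x by exists x0; apply/existsP; exists (Ordinal (hB _ _ h0).2).
case: (ex_minnP exQ) => x /existsP [y hy] hm.
exists x, y; split => // x' y' h; apply: hm; apply/existsP.
by exists (Ordinal (hB _ _ h).2).
Qed.

Lemma ofRM (R : rcfType) (x y : R) : ofR (x * y) = ofR x * ofR y.
Proof. exact: (rmorphM (real_complex R)). Qed.
Lemma ofRn (R : rcfType) (n : nat) : ofR (n%:R : R) = n%:R.
Proof. exact: (rmorph_nat (real_complex R)). Qed.
Lemma ofR_eq0 (R : rcfType) (x : R) : ofR x = 0 -> x = 0.
Proof. by case. Qed.
Lemma ofRD (R : rcfType) (x y : R) : ofR (x + y) = ofR x + ofR y.
Proof. exact: (rmorphD (real_complex R)). Qed.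
Lemma ofR0 (R : rcfType) : ofR (0 : R) = 0.
Proof. by []. Qed.
Lemma ifM (R : rcfType) (b : bool) (x y : R[i]) : (if b then x * y else 0) = (if b then x else 0) * y.
Proof. by case: b; rewrite ?mul0r. Qed.
Lemma nSn (n : nat) : (n.+1 != n)%N.
Proof. by elim: n. Qed.
Lemma npn (n : nat) : (0 < n)%N -> (n.-1 != n)%N.
Proof. by case: n => // n _; rewrite eq_sym nSn. Qed.
Definition sel (R : rcfType) (b : bool) (x : R[i]) : R[i] := if b then x else 0.
Lemma selM (R : rcfType) b (x y : R[i]) : sel b (x * y) = sel b x * y.
Proof. by case: b; rewrite /sel ?mul0r. Qed.
Lemma sel0 (R : rcfType) b : sel b (0 : R[i]) = 0.
Proof. by case: b. Qed.
Section Master.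
Variable R : rcfType.
Local Notation C := (R[i]).
Local Notation P := {mpoly C[3]}.

Ltac go := repeat match goal with
  | |- cf (_ + _) _ _ _ = _ + _ => rewrite cfD; congr (_ + _)
  | |- cf (- _) _ _ _ = - _ => rewrite cfN; congr (- _)
  | |- cf (cst _ * _) _ _ _ = _ * _ => rewrite cfC; congr (_ * _)
  end.

Lemma masterL (f : P) (c a b : C) p q r :
  cf (f^`M(0 : 'I_3) * vx R - f^`M(0 : 'I_3) * vx R * vy R
    + cst c * (f^`M(0 : 'I_3) * vx R * vx R)
    - cst a * (f^`M(0 : 'I_3) * vx R * vx R * vz R)
    - f^`M(1 : 'I_3) * vy R + f^`M(1 : 'I_3) * vy R * vx R
    - cst b * (f^`M(2 : 'I_3) * vz R)
    + cst a * (f^`M(2 : 'I_3) * vz R * vx R * vx R)) p q r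
  = cf f p q r * p%:R - (sel (0 < q)%N (cf f p q.-1 r * p%:R))
    + c * (sel (0 < p)%N (cf f p.-1 q r * p.-1%:R))
    - a * (sel (0 < r)%N (sel (0 < p)%N (cf f p.-1 q r.-1 * p.-1%:R)))
    - cf f p q r * q%:R + (sel (0 < p)%N (cf f p.-1 q r * q%:R))
    - b * (cf f p q r * r%:R)
    + a * (sel (0 < p)%N (sel (0 < p.-1)%N (cf f p.-1.-1 q r * r%:R))).
Proof.
rewrite /sel; go. all: try by [].
- exact: cfMxDx.
- by rewrite cfMy cfMxDx.
- by rewrite cfMx cfMxDx.
- by rewrite cfMz cfMx cfMxDx.
- exact: cfMyDy.
- by rewrite cfMx cfMyDy.
- exact: cfMzDz.
- by rewrite cfMx cfMx cfMzDz.
Qed.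

Lemma masterR (f : P) (k0 k1 k2 k3 k4 k6 : C) p q r :
  cf (cst k0 * f + cst k1 * (f * vx R) + cst k2 * (f * vy R)
   + cst k3 * (f * vz R) + cst k4 * (f * vx R * vx R)
   - cst k6 * (f * vx R * vz R)) p q r
  = k0 * cf f p q r + k1 * (sel (0 < p)%N (cf f p.-1 q r))
    + k2 * (sel (0 < q)%N (cf f p q.-1 r))
    + k3 * (sel (0 < r)%N (cf f p q r.-1))
    + k4 * (sel (0 < p)%N (sel (0 < p.-1)%N (cf f p.-1.-1 q r)))
    - k6 * (sel (0 < r)%N (sel (0 < p)%N (cf f p.-1 q r.-1))).
Proof.
rewrite /sel; go. all: try by [].
- exact: cfMx.
- exact: cfMy.
- exact: cfMz.
- by rewrite cfMx cfMx.
- by rewrite cfMz cfMx.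
Qed.
End Master.
Tactic Notation "eqn" constr(E) ident(H) constr(p) constr(q) constr(r) := have H := etrans (esym (masterL _ _ _ _ p q r))
   (etrans (E p q r) (masterR _ _ _ _ _ _ _ p q r)); rewrite /= in H.
Ltac lin H := match type of H with ?L = ?Rr =>
  first [ apply: (@etrans _ _ (L - Rr)); [ring | by rewrite H subrr]
        | apply: (@etrans _ _ (Rr - L)); [ring | by rewrite H subrr] ] end.
Ltac clean H := rewrite ?mul0r ?mulr0 ?if_same ?addr0 ?add0r ?oppr0 ?selM ?sel0 ?mul0r ?mulr0 ?if_same ?addr0 ?add0r ?oppr0 in H.

Unset Implicit Arguments.

Theorem lemma4p3 (R : rcfType) (a b c : R) (ha : 0 < a) (hb : 0 <= b) (hc : 0 <= c)
  (f : {mpoly R[i][3]}) (al0 al1 al2 al3 : R[i]) (N4 N6 : nat) :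
  let K : {mpoly R[i][3]} :=
    cst al0 + cst al1 * vx R + cst al2 * vy R + cst al3 * vz R
    + cst (ofR (N4%:R * a)) * vx R ^+ 2 - cst (ofR (N6%:R * a)) * vx R * vz R in
  mirreducible f -> (1 < tdeg f)%N -> K != 0 -> darboux a b c f K ->
  [/\ al0 = 0, al1 = 0, al3 = 0, N4 = 0%N & N6 = 0%N].
Proof.
move=> K irr dg _ [fn0 [_ hD]].
have KE : K * f = cst al0 * f + cst al1 * (f * vx R) + cst al2 * (f * vy R)
   + cst al3 * (f * vz R) + cst (ofR (N4%:R * a)) * (f * vx R * vx R)
   - cst (ofR (N6%:R * a)) * (f * vx R * vz R) by rewrite /K; ring.
rewrite vfieldE KE {KE} !ofRM !ofRn in hD.
have E := fun p q r => congr1 (fun h => cf h p q r) hD.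
set B := msize f.
have bnd : forall p q r, cf f p q r != 0 -> [/\ (p < B)%N, (q < B)%N & (r < B)%N].
  by move=> p q r /cf_bound; rewrite /B => h; split; lia.
have a0 : ofR a != 0 by apply/eqP => /ofR_eq0 /eqP; rewrite gt_eqF.
have [m0 [m00 fm0]] := nodiv (0 : 'I_3) irr dg.
have nz0 : cf f 0 (m0 (1 : 'I_3)) (m0 (2 : 'I_3)) != 0.
  by move: fm0; rewrite {1}(mk_of m0) m00.
have al3z : al3 = 0.
  have ex : exists r q, cf f 0 q r != 0 by exists (m0 (2 : 'I_3)), (m0 (1 : 'I_3)).
  have bd : forall r q, cf f 0 q r != 0 -> (r < B)%N /\ (q < B)%N.
    by move=> r q /bnd [].
  have [Rm [q [hq hmax]]] := @maxsel (fun r q => cf f 0 q r != 0) B ex bd.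
  have z1 : forall q, cf f 0 q Rm.+1 = 0.
    by move=> q'; apply/eqP; apply: contraT => /hmax; rewrite ltnn.
  eqn E Eq 0%N q (Rm.+1); rewrite ?z1 in Eq; clean Eq.
  have h : al3 * cf f 0 q Rm = 0 by lin Eq.
  by move/eqP: h; rewrite mulf_eq0 (negbTE hq) orbF => /eqP.
rewrite al3z in E.
have [Q0 [r0 al0E]] : exists Q r : nat, al0 = - (Q%:R + ofR b * r%:R).
  have ex : exists q r, cf f 0 q r != 0 by exists (m0 (1 : 'I_3)), (m0 (2 : 'I_3)).
  have bd : forall q r, cf f 0 q r != 0 -> (q < B)%N /\ (r < B)%N.
    by move=> q r /bnd [].
  have [Q [r [hr hmin]]] := @minsel (fun q r => cf f 0 q r != 0) B ex bd.
  exists Q, r.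
  move: hr hmin; case: Q => [|Q] hr hmin.
    eqn E Eq 0%N 0%N r; clean Eq.
    have h : (al0 + (0%:R + ofR b * r%:R)) * cf f 0 0 r = 0 by lin Eq.
    by move/eqP: h; rewrite mulf_eq0 (negbTE hr) orbF addr_eq0 => /eqP.
  have z : forall r, cf f 0 Q r = 0.
    by move=> r'; apply/eqP; apply: contraT => /hmin; rewrite ltnn.
  eqn E Eq 0%N (Q.+1) r; rewrite ?z in Eq; clean Eq.
  have h : (al0 + (Q.+1%:R + ofR b * r%:R)) * cf f 0 Q.+1 r = 0 by lin Eq.
  by move/eqP: h; rewrite mulf_eq0 (negbTE hr) orbF addr_eq0 => /eqP.
have N4z : N4 = 0%N.
  have [m1 [m12 fm1]] := nodiv (2 : 'I_3) irr dg.
  have nz1 : cf f (m1 (0 : 'I_3)) (m1 (1 : 'I_3)) 0 != 0.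
    by move: fm1; rewrite {1}(mk_of m1) m12.
  have ex : exists p q, cf f p q 0 != 0 by exists (m1 (0 : 'I_3)), (m1 (1 : 'I_3)).
  have bd : forall p q, cf f p q 0 != 0 -> (p < B)%N /\ (q < B)%N.
    by move=> p q /bnd [].
  have [P [q [hq hmax]]] := @maxsel (fun p q => cf f p q 0 != 0) B ex bd.
  have z1 : forall q, cf f P.+1 q 0 = 0.
    by move=> q'; apply/eqP; apply: contraT => /hmax; rewrite ltnn.
  have z2 : forall q, cf f P.+2 q 0 = 0.
    by move=> q'; apply/eqP; apply: contraT => /hmax; rewrite ltnNge leqnSn.
  eqn E Eq (P.+2) q 0%N; rewrite ?z1 ?z2 in Eq; clean Eq.
  have h : (N4%:R * ofR a) * cf f P q 0 = 0 by lin Eq.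
  move/eqP: h; rewrite mulf_eq0 (negbTE hq) orbF mulf_eq0 (negbTE a0) orbF.
  by rewrite pnatr_eq0 => /eqP.
rewrite N4z in E.
have [m2 [m21 fm2]] := nodiv (1 : 'I_3) irr dg.
have nz2 : cf f (m2 (0 : 'I_3)) 0 (m2 (2 : 'I_3)) != 0.
  by move: fm2; rewrite {1}(mk_of m2) m21.
have ex2 : exists r p, cf f p 0 r != 0 by exists (m2 (2 : 'I_3)), (m2 (0 : 'I_3)).
have bd2 : forall r p, cf f p 0 r != 0 -> (r < B)%N /\ (p < B)%N.
  by move=> r p /bnd [].
have [Rt [p0 [hp0 hmaxR]]] := @maxsel (fun r p => cf f p 0 r != 0) B ex2 bd2.
have zR : forall p, cf f p 0 Rt.+1 = 0.
  by move=> p; apply/eqP; apply: contraT => /hmaxR; rewrite ltnn.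
have F1 : forall p, cf f p 0 Rt != 0 -> p = N6.
  move=> p hp; eqn E Eq (p.+1) 0%N (Rt.+1); rewrite ?zR in Eq; clean Eq.
  have h : ofR a * ((p%:R - N6%:R) * cf f p 0 Rt) = 0 by lin Eq.
  move/eqP: h; rewrite !mulf_eq0 (negbTE a0) (negbTE hp) /= orbF subr_eq0 eqr_nat.
  by move/eqP.
have zF : forall p, p != N6 -> cf f p 0 Rt = 0.
  by move=> p hp; apply/eqP; apply: contraT => /F1 e; rewrite e eqxx in hp.
have nzN : cf f N6 0 Rt != 0 by rewrite -(F1 _ hp0).
have F2 : al1 = ofR c * N6%:R.
  have zN1 : cf f N6.+1 0 Rt = 0 by apply: zF; apply: nSn.
  eqn E Eq (N6.+1) 0%N Rt; rewrite zN1 in Eq; clean Eq.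
  have zm : sel (0 < N6)%N (cf f N6.-1 0 Rt) = 0.
    by rewrite /sel; case: ifP => // h; apply: zF; apply: npn.
  rewrite zm in Eq; clean Eq.
  have h : (al1 - ofR c * N6%:R) * cf f N6 0 Rt = 0 by lin Eq.
  by move/eqP: h; rewrite mulf_eq0 (negbTE nzN) orbF subr_eq0 => /eqP.
have chain : forall r d, cf f d 0 r.+1 != 0 -> exists d', (d < d')%N /\ cf f d' 0 r != 0.
  move=> r d hd.
  have ex3 : exists x y, (y == 0%N) && (cf f x 0 r.+1 != 0) by exists d, 0%N; rewrite eqxx.
  have bd3 : forall x y, (y == 0%N) && (cf f x 0 r.+1 != 0) -> (x < B)%N /\ (y < B)%N.
    move=> x y /andP [/eqP -> /bnd [h1 _ _]]; split => //; exact: leq_ltn_trans (leq0n _) h1.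
  have [D [y [/andP [_ hD1] hmD]]] := @maxsel _ B ex3 bd3.
  have dD : (d <= D)%N by apply: (hmD d 0%N); rewrite eqxx.
  have zD1 : cf f D.+1 0 r.+1 = 0.
    by apply/eqP; apply: contraT => h; have := hmD D.+1 0%N; rewrite eqxx h ltnn => /(_ isT).
  have zD2 : cf f D.+2 0 r.+1 = 0.
    by apply/eqP; apply: contraT => h; have := hmD D.+2 0%N; rewrite eqxx h ltnNge leqnSn => /(_ isT).
  case: (eqVneq (cf f D.+1 0 r) 0) => hz; last by exists D.+1; split => //; rewrite ltnS.
  eqn E Eq (D.+2) 0%N (r.+1); rewrite ?zD1 ?zD2 ?hz in Eq; clean Eq.
  by move/eqP: Eq; rewrite !mulf_eq0 (negbTE a0) (negbTE hD1) pnatr_eq0.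
have iter : forall j, (j <= Rt)%N -> exists d, (N6 + j <= d)%N /\ cf f d 0 (Rt - j) != 0.
  elim=> [|j IH] hj.
    by exists N6; rewrite addn0 subn0 leqnn nzN.
  have [d [hd1 hd2]] := IH (ltnW hj).
  have e : (Rt - j = (Rt - j.+1).+1)%N by rewrite subnS prednK // subn_gt0.
  rewrite e in hd2.
  have [d' [hd' hd'2]] := chain _ _ hd2.
  by exists d'; split => //; rewrite addnS; apply: leq_ltn_trans hd1 hd'.
have [k [hk1 hk2]] := iter Rt (leqnn Rt).
rewrite subnn in hk2.
have ex4 : exists x y, (y == 0%N) && (cf f x 0 0 != 0) by exists k, 0%N; rewrite eqxx.
have bd4 : forall x y, (y == 0%N) && (cf f x 0 0 != 0) -> (x < B)%N /\ (y < B)%N.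
  move=> x y /andP [/eqP -> /bnd [h1 _ _]]; split => //; exact: leq_ltn_trans (leq0n _) h1.
have [E0 [y [/andP [_ hE0] hmE]]] := @maxsel _ B ex4 bd4.
have kE : (k <= E0)%N by apply: (hmE k 0%N); rewrite eqxx.
have zE1 : cf f E0.+1 0 0 = 0.
  by apply/eqP; apply: contraT => h; have := hmE E0.+1 0%N; rewrite eqxx h ltnn => /(_ isT).
have al1E : al1 = ofR c * E0%:R.
  eqn E Eq (E0.+1) 0%N 0%N; rewrite ?zE1 in Eq; clean Eq.
  have h : (al1 - ofR c * E0%:R) * cf f E0 0 0 = 0 by lin Eq.
  by move/eqP: h; rewrite mulf_eq0 (negbTE hE0) orbF subr_eq0 => /eqP.
have key : exists n, al0 = n%:R /\ (N6 <= n)%N.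
  case: (eqVneq c 0) => c0.
    have al1z : al1 = 0 by rewrite F2 c0 ofR0 mul0r.
    eqn E Eq E0 0%N 0%N; rewrite c0 ofR0 al1z in Eq; clean Eq.
    have h : (al0 - E0%:R) * cf f E0 0 0 = 0 by lin Eq.
    exists E0; split.
      by move/eqP: h; rewrite mulf_eq0 (negbTE hE0) orbF subr_eq0 => /eqP.
    by apply: leq_trans kE; apply: leq_trans hk1; apply: leq_addr.
  have eE : E0 = N6.
    have : ofR c * E0%:R = ofR c * N6%:R by rewrite -al1E -F2.
    have c0' : ofR c != 0 by apply/eqP => /ofR_eq0 /eqP; rewrite (negbTE c0).
    by move/(mulfI c0')/eqP; rewrite eqr_nat => /eqP.
  have Rt0 : Rt = 0%N.
    have : (N6 + Rt <= N6)%N by rewrite -{2}eE; apply: leq_trans kE.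
    by rewrite -{2}[N6]addn0 leq_add2l leqn0 => /eqP.
  rewrite Rt0 in nzN zF.
  have zm0 : sel (0 < N6)%N (cf f N6.-1 0 0) = 0.
    by rewrite /sel; case: ifP => // h; apply: zF; apply: npn.
  eqn E Eq N6 0%N 0%N; clean Eq; rewrite ?zm0 in Eq; clean Eq.
  have h : (al0 - N6%:R) * cf f N6 0 0 = 0 by lin Eq.
  exists N6; split => //.
  by move/eqP: h; rewrite mulf_eq0 (negbTE nzN) orbF subr_eq0 => /eqP.
have [n [al0n hn]] := key.
have n0 : n = 0%N.
  have e : (n%:R + Q0%:R + b * r0%:R : R) = 0.
    apply: ofR_eq0; rewrite !ofRD ofRM !ofRn -al0n al0E; ring.
  have : (n%:R : R) <= 0.
    rewrite -e -addrA lerDl addr_ge0 // mulr_ge0 //.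
  by rewrite lern0 => /eqP.
have N6z : N6 = 0%N by apply/eqP; rewrite -leqn0 -n0.
split => //.
- by rewrite al0n n0.
- by rewrite F2 N6z mulr0.
Qed.
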